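(* Let $C$ be a smooth and decomposable algebraic circuit over the probability semiring $(\mathbb R_{\ge0},+,\cdot,0,1)$ and variables $\mathbf H\cup\mathbf I^-$ (disjoint), representing $q=p_C$, and suppose $C$ is $\mathbf H$-deterministic, $\mathbf I^-$-deterministic and $(\mathbf H\cup\mathbf I^-)$-deterministic. Then the value $\max_{\mathbf h}\sum_{\mathbf i}\mathbb 1\big[q(\mathbf h,\mathbf i)\ne0\ \text{and}\ q(\mathbf h,\mathbf i)=\max_{\mathbf h'}q(\mathbf h',\mathbf i)\big]$ (the most frugal explanation value, for $q(\mathbf h,\mathbf i)=p(\mathbf h,\mathbf i,\mathbf e)$ with evidence $\mathbf e$ and the remaining variables marginalized) can be computed in $O(|C|)$ time.
   Context: An algebraic circuit over a semiring and variables $\mathbf V$ (finite domains) is a rooted DAG with input nodes (functions of a scope $\mathbf W\subseteq\mathbf V$), sum nodes and binary product nodes computing sums/products of children's functions on restricted assignments; internal scopes $\mathrm{vars}(\alpha)$ are unions of children's scopes; $p_\alpha$ is the function at $\alpha$; $|C|$ is the number of edges. Smooth: children of each sum node share a scope; decomposable: children of each product node have disjoint scopes. $\mathrm{supp}_{\mathbf X}(\alpha)=\{\mathbf x\in\mathrm{Assign}(\mathbf X\cap\mathrm{vars}(\alpha)):\exists\mathbf y\in\mathrm{Assign}(\mathrm{vars}(\alpha)\setminus\mathbf X),\ p_\alpha(\mathbf x,\mathbf y)\ne0\}$; $C$ is $\mathbf X$-deterministic if every sum node $\alpha=+_i\alpha_i$ has $\mathrm{vars}(\alpha)\cap\mathbf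 X=\emptyset$ or pairwise disjoint $\mathrm{supp}_{\mathbf X}(\alpha_i)$. Unit-cost arithmetic; operations on single input nodes take constant time. *)

(* Defs.v *)
From HB Require Import structures.
From mathcomp Require Import all_boot all_order all_algebra.
From mathcomp Require Import reals.
Set Implicit Arguments. Unset Strict Implicit. Unset Printing Implicit Defensive.
Import Order.TTheory GRing.Theory Num.Theory.
Local Open Scope ring_scope.

(* The variable set is V = Hv + Iv : the H-variables are the [inl _], the   *)
(* I^- variables are the [inr _] (so H and I^- are disjoint and cover V).   *)

Definition HAsg (Hv Iv : finType) (D : Hv + Iv -> finType) :=
  {dffun forall a : Hv, D (inl a)}.
Definition IAsg (Hv Iv : finType) (D : Hv + Iv -> finType) :=
  {dffun forall b : Iv, D (inr b)}.
Definition Asg (Hv Iv : finType) (D : Hv + Iv -> finType) :=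
  (HAsg D * IAsg D)%type.

Definition asg_val (Hv Iv : finType) (D : Hv + Iv -> finType)
  (x : Asg D) (v : Hv + Iv) : D v :=
  match v as v0 return D v0 with
  | inl a => x.1 a
  | inr b => x.2 b
  end.

Definition agree (Hv Iv : finType) (D : Hv + Iv -> finType)
  (X : {set Hv + Iv}) (x y : Asg D) : Prop :=
  forall v, v \in X -> asg_val x v = asg_val y v.

Definition Hset (Hv Iv : finType) : {set Hv + Iv} :=
  [set v : Hv + Iv | if v is inl _ then true else false].
Definition Iset (Hv Iv : finType) : {set Hv + Iv} := ~: Hset Hv Iv.

(* Algebraic circuits over (R_{>=0}, +, *, 0, 1), represented as a DAG in   *)
(* topological order: a list of nodes, children referenced by their index   *)
(* (strictly smaller than the index of the parent); the root is the last    *)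
(* node.  Sum nodes are n-ary, product nodes binary.  An input node carries *)
(* its scope W and its function (given on total assignments, required to    *)
(* depend only on the variables in W).                                      *)

Section Circuits.
Variables (Hv Iv : finType) (D : Hv + Iv -> finType) (R : realType).

Inductive node :=
  | Inp of {set Hv + Iv} & (Asg D -> R)
  | SumN of seq nat
  | ProdN of nat & nat.

Definition circuit := seq node.

Definition fdef : (Asg D -> R) * {set Hv + Iv} := (fun _ => 0, set0).

Definition node_sem (acc : seq ((Asg D -> R) * {set Hv + Iv})) (n : node) :=
  match n with
  | Inp W f => (f, W)
  | SumN cs => ((fun x => \sum_(j <- cs) (nth fdef acc j).1 x),
                \bigcup_(j <- cs) (nth fdef acc j).2)
  | ProdN a b => ((fun x => (nth fdef acc a).1 x * (nth fdef acc b).1 x),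
                  (nth fdef acc a).2 :|: (nth fdef acc b).2)
  end.

Definition sems (C : circuit) :=
  foldl (fun acc n => rcons acc (node_sem acc n)) [::] C.

Definition pfun (C : circuit) (k : nat) : Asg D -> R := (nth fdef (sems C) k).1.
Definition pvars (C : circuit) (k : nat) : {set Hv + Iv} := (nth fdef (sems C) k).2.

Definition croot (C : circuit) : nat := (size C).-1.

Definition children (n : node) : seq nat :=
  match n with
  | Inp _ _ => [::]
  | SumN cs => cs
  | ProdN a b => [:: a; b]
  end.

Definition ndef : node := SumN [::].

Definition wf_circuit (C : circuit) : Prop :=
  (0 < size C)%N /\
  (forall k, (k < size C)%N ->
     match nth ndef C k with
     | Inp W f => (forall x, 0 <= f x) /\ (forall x y, agree W x y -> f x = f y)
     | n => all (fun j => (j < k)%N) (children n)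
     end) /\
  (* rooted: every non-root node is a child of some later node, hence every
     node is reachable from the root *)
  (forall k, (k < croot C)%N -> exists2 k', (k' < size C)%N & k \in children (nth ndef C k')).

Definition edges (C : circuit) : nat := \sum_(n <- C) size (children n).

Definition smooth (C : circuit) : Prop :=
  forall k cs, (k < size C)%N -> nth ndef C k = SumN cs ->
    forall i j, i \in cs -> j \in cs -> pvars C i = pvars C j.

Definition decomposable (C : circuit) : Prop :=
  forall k a b, (k < size C)%N -> nth ndef C k = ProdN a b ->
    [disjoint pvars C a & pvars C b].

(* x's restriction to X ∩ vars(alpha) belongs to supp_X(alpha) *)
Definition in_supp (X : {set Hv + Iv}) (C : circuit) (k : nat) (x : Asg D) : Prop :=
  exists y, agree (X :&: pvars C k) x y /\ pfun C k y <> 0.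

Definition deterministic (X : {set Hv + Iv}) (C : circuit) : Prop :=
  forall k cs, (k < size C)%N -> nth ndef C k = SumN cs ->
    X :&: pvars C k = set0 \/
    (forall i j, (i < size cs)%N -> (j < size cs)%N -> i <> j ->
       ~ (exists x, in_supp X C (nth 0 cs i) x /\ in_supp X C (nth 0 cs j) x)).

Definition mfe_value (C : circuit) : nat :=
  let q := pfun C (croot C) in
  (\max_(h : HAsg D) \sum_(i : IAsg D)
     nat_of_bool ((q (h, i) != 0%R) &&
                  (q (h, i) == \big[Num.max/0%R]_(h' : HAsg D) q (h', i))%R))%N.

End Circuits.

(* Cost model: linear-time single bottom-up pass algorithms.                *)
(* Each node gets a state of k reals (k fixed, independent of the circuit). *)
(* - input node: state computed by an arbitrary operation on that single    *)
(*   input node (constant time by assumption), cost 1;                      *)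
(* - product node: state = fixed arithmetic expressions of its children's   *)
(*   states;                                                                *)
(* - sum node: fold over its children with fixed arithmetic expressions;    *)
(* - output: fixed arithmetic expression of the root state.                 *)
(* Arithmetic expressions use unit-cost +, -, *, constants and comparison;  *)
(* their cost is their size.                                                *)

Inductive expr (R : Type) (X : Type) :=
  | EVar of X
  | ECst of R
  | EAdd of expr R X & expr R X
  | EOpp of expr R X
  | EMul of expr R X & expr R X
  | EIfLe of expr R X & expr R X & expr R X & expr R X.

Arguments EVar {R X}. Arguments ECst {R X}.

Fixpoint eeval (R : realType) (X : Type) (env : X -> R) (e : expr R X) : R :=
  match e with
  | EVar x => env x
  | ECst r => r
  | EAdd a b => eeval env a + eeval env b
  | EOpp a => - eeval env a
  | EMul a b => eeval env a * eeval env b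
  | EIfLe a b c d => if eeval env a <= eeval env b then eeval env c else eeval env d
  end.

Fixpoint esize (R X : Type) (e : expr R X) : nat :=
  match e with
  | EVar _ | ECst _ => 1
  | EAdd a b | EMul a b => (esize a + esize b).+1
  | EOpp a => (esize a).+1
  | EIfLe a b c d => (esize a + esize b + esize c + esize d).+1
  end.

Record algorithm (R : realType) := Algorithm {
  nst : nat;
  a_inp : forall (Hv Iv : finType) (D : Hv + Iv -> finType),
            {set Hv + Iv} -> (Asg D -> R) -> 'I_nst -> R;
  a_prod : 'I_nst -> expr R ('I_nst + 'I_nst)%type;
  a_sinit : 'I_nst -> expr R void;
  a_sstep : 'I_nst -> expr R ('I_nst + 'I_nst)%type;   (* (accumulator, child) *)
  a_sfin : 'I_nst -> expr R 'I_nst;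
  a_out : expr R 'I_nst
}.

Section Run.
Variables (R : realType) (A : algorithm R).
Variables (Hv Iv : finType) (D : Hv + Iv -> finType).

Definition pair_env (s t : 'I_(nst A) -> R) (z : ('I_(nst A) + 'I_(nst A))%type) : R :=
  match z with inl u => s u | inr u => t u end.

Definition sdef : 'I_(nst A) -> R := fun _ => 0.

Definition node_state (acc : seq ('I_(nst A) -> R)) (n : node D R) : 'I_(nst A) -> R :=
  match n with
  | Inp W f => @a_inp R A Hv Iv D W f
  | ProdN a b => fun j => eeval (pair_env (nth sdef acc a) (nth sdef acc b)) (@a_prod R A j)
  | SumN cs =>
      let acc0 := fun j => eeval (fun v : void => match v with end) (@a_sinit R A j) in
      let fin := foldl (fun s c => fun j => eeval (pair_env s (nth sdef acc c)) (@a_sstep R A j))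
                       acc0 cs in
      fun j => eeval fin (@a_sfin R A j)
  end.

Definition states (C : circuit D R) :=
  foldl (fun acc n => rcons acc (node_state acc n)) [::] C.

Definition run (C : circuit D R) : R :=
  eeval (nth sdef (states C) (croot C)) (@a_out R A).

Definition tsize (X : Type) (E : 'I_(nst A) -> expr R X) : nat :=
  \sum_(j < nst A) esize (E j).

Definition node_cost (n : node D R) : nat :=
  match n with
  | Inp _ _ => 1
  | ProdN _ _ => tsize (@a_prod R A)
  | SumN cs => tsize (@a_sinit R A) + size cs * tsize (@a_sstep R A) + tsize (@a_sfin R A)
  end.

Definition cost (C : circuit D R) : nat :=
  \sum_(n <- C) node_cost n + esize (@a_out R A).

End Run.

(* Main.v *)
Require Import Defs.
From HB Require Import structures.
From mathcomp Require Import all_boot all_order all_algebra.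
From mathcomp Require Import reals.
From mathcomp Require Import lra zify.
Set Implicit Arguments. Unset Strict Implicit. Unset Printing Implicit Defensive.
Import Order.TTheory GRing.Theory Num.Theory.
Local Open Scope ring_scope.

Section M.
Variables (Hv Iv : finType) (D : Hv + Iv -> finType) (R : realType).
Notation HA := (HAsg D).
Notation IA := (IAsg D).
Notation AS := (Asg D).

Definition mx (q : AS -> R) (i : IA) : R := \big[Num.max/0]_(h' : HA) q (h', i).
Definition Fq (q : AS -> R) h i : bool := (q (h,i) != 0) && (q (h,i) == mx q i).
Definition MT (q : AS -> R) : nat := (\max_(h : HA) \sum_(i : IA) Fq q h i)%N.
Definition dep (q : AS -> R) (W : {set Hv + Iv}) := forall x y, agree W x y -> q x = q y.
Definition nonneg (q : AS -> R) := forall x, 0 <= q x.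

Lemma mfeE (C : circuit D R) : mfe_value C = MT (pfun C (croot C)).
Proof. by []. Qed.

Lemma mx_ge q h i : q (h,i) <= mx q i.
Proof. exact: (le_bigmax 0 (fun h' => q (h', i)) h). Qed.

Lemma mx_ge0 q i : 0 <= mx q i.
Proof. exact: bigmax_ge_id. Qed.

Lemma mx_attain q i (h0 : HA) : nonneg q -> exists h, mx q i = q (h,i).
Proof.
move=> nq; have [h _ e] := @eq_bigmax _ R HA 0 h0 predT (fun h' => q (h', i)) isT (fun _ _ => nq _).
by exists h; rewrite /mx -e.
Qed.

Lemma HA_empty_mx q i : (forall h : HA, False) -> mx q i = 0.
Proof. by move=> e; rewrite /mx big_pred0 // => h; case: (e h). Qed.

Definition hmix (W : {set Hv + Iv}) (h1 h2 : HA) : HA :=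
  finfun (fun a => if inl a \in W then h1 a else h2 a).
Definition imix (W : {set Hv + Iv}) (i1 i2 : IA) : IA :=
  finfun (fun b => if inr b \in W then i1 b else i2 b).

Lemma agree_hmix1 W h1 h2 i : agree W (hmix W h1 h2, i) (h1, i).
Proof. by case=> [a|b] //= Wa; rewrite ffunE Wa. Qed.

Lemma agree_hmix2 (W W' : {set Hv + Iv}) h1 h2 i : [disjoint W & W'] -> agree W' (hmix W h1 h2, i) (h2, i).
Proof.
move=> dis [a|b] //= Wa; rewrite ffunE.
by have -> : (inl a \in W) = false by apply: (disjointFl dis).
Qed.

Lemma agree_imix1 W h i1 i2 : agree W (h, imix W i1 i2) (h, i1).
Proof. by case=> [a|b] //= Wa; rewrite ffunE Wa. Qed.

Lemma agree_imix2 (W W' : {set Hv + Iv}) h i1 i2 : [disjoint W & W'] -> agree W' (h, imix W i1 i2) (h, i2).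
Proof.
move=> dis [a|b] //= Wa; rewrite ffunE.
by have -> : (inr b \in W) = false by apply: (disjointFl dis).
Qed.

Lemma Fq_depH q W (h h' : HA) (i : IA) : dep q W -> (forall a, inl a \in W -> h a = h' a) ->
  Fq q h i = Fq q h' i.
Proof.
move=> dq hh; rewrite /Fq (dq (h,i) (h',i)) //.
by case=> [a|b] //= /hh.
Qed.

Lemma mx_depI q W (i i' : IA) : dep q W -> (forall b, inr b \in W -> i b = i' b) ->
  mx q i = mx q i'.
Proof.
move=> dq ii; apply: eq_bigr => h _; apply: dq.
by case=> [a|b] //= /ii.
Qed.

Lemma Fq_depI q W (h : HA) (i i' : IA) : dep q W -> (forall b, inr b \in W -> i b = i' b) ->
  Fq q h i = Fq q h i'.
Proof.
move=> dq ii; rewrite /Fq (mx_depI dq ii) (dq (h,i) (h,i')) //.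
by case=> [a|b] //= /ii.
Qed.

Lemma Fq_prod_aux (a b A B : R) : 0 <= a -> a <= A -> 0 <= b -> b <= B ->
  ((a * b != 0) && (a * b == A * B)) = ((a != 0) && (a == A)) && ((b != 0) && (b == B)).
Proof.
move=> a0 aA b0 bB.
have [->|an] := eqVneq a 0; first by rewrite mul0r !eqxx.
have [->|bn] := eqVneq b 0; first by rewrite mulr0 eqxx /= andbF.
rewrite mulf_neq0 //=.
have ap : 0 < a by rewrite lt_def an a0.
have bp : 0 < b by rewrite lt_def bn b0.
have [->|aA'] := eqVneq a A.
  rewrite /=; apply/idP/idP => [/eqP|/eqP -> //].
  by move/mulfI; rewrite gt_eqF ?(lt_le_trans ap aA) // => /(_ isT) ->.
rewrite /=; apply/negbTE; rewrite neq_lt; apply/orP; left.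
have aA2 : a < A by rewrite lt_def eq_sym aA' aA.
apply: (@lt_le_trans _ _ (A * b)); first by rewrite ltr_pM2r.
by rewrite ler_pM2l // (lt_trans ap aA2).
Qed.

Lemma sum1_cardI : (\sum_(i : IA) 1 = #|IA|)%N.
Proof. by rewrite sum1_card. Qed.

Lemma L_prod q1 q2 W1 W2 : nonneg q1 -> nonneg q2 -> dep q1 W1 -> dep q2 W2 ->
  [disjoint W1 & W2] ->
  (MT (fun x => (q1 x * q2 x)%R) * #|IA| = MT q1 * MT q2)%N.
Proof.
move=> n1 n2 d1 d2 dis.
have dis' : [disjoint W2 & W1] by rewrite disjoint_sym.
pose q := fun x => q1 x * q2 x.
have mxq : forall i, mx q i = mx q1 i * mx q2 i.
  move=> i; case: (pickP (@predT HA)) => [h0 _|e]; last first.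
    by rewrite !(@HA_empty_mx _ i) ?mulr0 // => h; move: (e h).
  apply/eqP; rewrite eq_le; apply/andP; split.
    apply: bigmax_le; first by rewrite mulr_ge0 // mx_ge0.
    by move=> h _; rewrite ler_pM // mx_ge.
  have [h1 e1] := mx_attain i h0 n1; have [h2 e2] := mx_attain i h0 n2.
  have a1 : agree W1 (hmix W1 h1 h2, i) (h1, i) by apply: agree_hmix1.
  have a2 : agree W2 (hmix W1 h1 h2, i) (h2, i) by apply: agree_hmix2.
  rewrite e1 e2 -(d1 _ _ a1) -(d2 _ _ a2); exact: mx_ge.
have Fqq : forall h i, Fq q h i = Fq q1 h i && Fq q2 h i.
  move=> h i; rewrite /Fq mxq Fq_prod_aux // ?mx_ge //.
pose S1 h := (\sum_(i : IA) Fq q1 h i)%N.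
pose S2 h := (\sum_(i : IA) Fq q2 h i)%N.
have Sq : forall h, ((\sum_(i : IA) Fq q h i) * #|IA| = S1 h * S2 h)%N.
  move=> h; rewrite -sum1_cardI big_distrl /= /S1 /S2 big_distrlr /=.
  under eq_bigr do rewrite big_distrr /=.
  rewrite !pair_big /=.
  pose phi := fun p : IA * IA => (imix W1 p.1 p.2, imix W1 p.2 p.1).
  have phiK : involutive phi.
    case=> i1 i2; rewrite /phi /=; congr pair; apply/ffunP => b; rewrite !ffunE;
    by case: (inr b \in W1).
  rewrite (reindex_inj (inv_inj phiK)) /=.
  apply: eq_bigr => -[i1 i2] _ /=.
  have e1 : Fq q1 h (imix W1 i1 i2) = Fq q1 h i1.
    by apply: (Fq_depI _ d1) => b Wb; rewrite ffunE Wb.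
  have e2 : Fq q2 h (imix W1 i1 i2) = Fq q2 h i2.
    apply: (Fq_depI _ d2) => b Wb; rewrite ffunE.
    by rewrite (disjointFl dis Wb).
  by rewrite Fqq muln1 e1 e2; case: (Fq q1 h i1); case: (Fq q2 h i2).
rewrite /MT (big_morph (fun x => x * #|IA|)%N (fun x y => maxnMl x y #|IA|) (mul0n _)).
under eq_bigr => h _ do rewrite Sq.
apply/eqP; rewrite eqn_leq; apply/andP; split.
  by apply/bigmax_leqP => h _; rewrite leq_mul // (leq_bigmax h).
case: (pickP (@predT HA)) => [h0 _|e]; last first.
  by rewrite [X in (X * _)%N]big_pred0 // => h; move: (e h).
have c0 : (0 < #|HA|)%N by apply/card_gt0P; exists h0.
have [h1 ->] := @bigop.eq_bigmax HA S1 c0.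
have [h2 ->] := @bigop.eq_bigmax HA S2 c0.
apply: leq_trans (leq_bigmax (hmix W1 h1 h2)).
rewrite /S1 /S2; apply: leq_mul; apply: eq_leq; apply: eq_bigr => i _.
  by rewrite (@Fq_depH q1 W1 (hmix W1 h1 h2) h1 i d1) // => a Wa; rewrite ffunE Wa.
by rewrite (@Fq_depH q2 W2 (hmix W1 h1 h2) h2 i d2) // => a Wa; rewrite ffunE (disjointFl dis Wa).
Qed.

Lemma Fq_ne0 q h i : Fq q h i -> q (h,i) != 0.
Proof. by case/andP. Qed.

Lemma sum_one_R n (r : 'I_n -> R) : (forall p, 0 <= r p) ->
  (forall p p', p != p' -> r p = 0 \/ r p' = 0) ->
  ((\sum_p r p != 0) : nat) = (\sum_p (r p != 0%R : nat))%N.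
Proof.
move=> r0 one.
case: (pickP (fun p => r p != 0)) => [p rp|none].
  rewrite (bigD1 p) //= [in RHS](bigD1 p) //= big1; last first.
    by move=> p' pp; case: (one p p'); rewrite 1?eq_sym // => e; rewrite e eqxx in rp.
  rewrite big1 ?addr0 ?rp ?addn0 //.
  by move=> p' pp; case: (one p p'); rewrite 1?eq_sym // => e; [rewrite e eqxx in rp | rewrite e eqxx].
rewrite big1 => [|p _]; last by move: (none p) => /negbFE/eqP.
rewrite eqxx big1 // => p _; by rewrite (none p).
Qed.

Lemma sum_one_nat n (a : 'I_n -> nat) :
  (forall p p', p != p' -> a p = 0%N \/ a p' = 0%N) ->
  (\sum_p a p = \max_p a p)%N.
Proof.
move=> one.
case: (pickP (fun p => a p != 0%N)) => [p rp|none].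
  rewrite (bigD1 p) //= [in RHS](bigD1 p) //= big1; last first.
    by move=> p' pp; case: (one p p'); rewrite 1?eq_sym // => e; rewrite e eqxx in rp.
  rewrite big1 ?addn0 ?maxn0 //.
  by move=> p' pp; case: (one p p'); rewrite 1?eq_sym // => e; rewrite e eqxx in rp.
rewrite !big1 // => p _; by move: (none p) => /negbFE/eqP.
Qed.

Lemma maxb (T : finType) (b : T -> bool) : (\max_t (b t : nat))%N = [exists t, b t].
Proof.
case: existsP => [[t bt]|nb].
  apply/eqP; rewrite eqn_leq; apply/andP; split.
    by apply/bigmax_leqP => t' _; exact: leq_b1.
  by apply: leq_trans (leq_bigmax t); rewrite bt.
by rewrite big1 // => t _; case: (boolP (b t)) => // bt; case: nb; exists t.
Qed.

Lemma maxconst (T : finType) (f : T -> nat) t0 : (forall t, f t = f t0) -> (\max_t f t)%N = f t0.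
Proof.
move=> c; apply/eqP; rewrite eqn_leq (leq_bigmax t0) andbT.
by apply/bigmax_leqP => t _; rewrite c.
Qed.

Lemma max_empty (T : finType) (f : T -> nat) : (forall t : T, False) -> (\max_t f t)%N = 0%N.
Proof. by move=> e; rewrite big_pred0 // => t; case: (e t). Qed.

Lemma sum_empty (T : finType) (f : T -> nat) : (forall t : T, False) -> (\sum_t f t)%N = 0%N.
Proof. by move=> e; rewrite big_pred0 // => t; case: (e t). Qed.

Section Sums.
Variables (n : nat) (Q : 'I_n -> AS -> R).
Hypothesis Qn : forall p, nonneg (Q p).
Let q := fun x => \sum_(p < n) Q p x.

Lemma q_nonneg : nonneg q.
Proof. by move=> x; apply: sumr_ge0 => p _; apply: Qn. Qed.

Lemma L_sumHI :
  (forall p p', p != p' -> forall h h' i, Q p (h,i) != 0 -> Q p' (h',i) != 0 -> False) ->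
  (forall p p', p != p' -> forall h i i', Q p (h,i) != 0 -> Q p' (h,i') != 0 -> False) ->
  MT q = (\max_(p < n) MT (Q p))%N.
Proof.
move=> Id Hd.
have Fs : forall h i, (Fq q h i : nat) = (\sum_(p < n) (Fq (Q p) h i : nat))%N.
  move=> h i; case: (pickP (fun p => Q p (h,i) != 0)) => [p Qp|none].
    have oth : forall p' h', p' != p -> Q p' (h',i) = 0.
      move=> p' h' pp; apply/eqP; apply/negP => /negP Q'.
      by apply: (Id p p' _ h h' i Qp Q'); rewrite eq_sym.
    have qe : forall h', q (h',i) = Q p (h',i).
      move=> h'; rewrite /q (bigD1 p) //= big1 ?addr0 // => p' /oth; exact.
    have mxe : mx q i = mx (Q p) i by apply: eq_bigr => h' _; rewrite qe.
    rewrite (bigD1 p) //= big1 ?addn0; first by rewrite /Fq mxe qe.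
    by move=> p' /oth e; rewrite /Fq e eqxx.
  have qe : q (h,i) = 0 by rewrite /q big1 // => p _; move: (none p) => /negbFE/eqP.
  rewrite /Fq qe eqxx /= big1 // => p _; by rewrite (none p).
rewrite /MT.
under eq_bigr => h _ do (under eq_bigr => i _ do rewrite Fs; rewrite exchange_big /=).
have e : forall h, (\sum_(p < n) \sum_i (Fq (Q p) h i : nat) = \max_(p < n) \sum_i (Fq (Q p) h i : nat))%N.
  move=> h; apply: sum_one_nat => p p' pp.
  case: (pickP (fun i => Fq (Q p) h i)) => [i Fi|n1]; last by left; rewrite big1 // => j _; rewrite n1.
  case: (pickP (fun i => Fq (Q p') h i)) => [i' Fi'|n2]; last by right; rewrite big1 // => j _; rewrite n2.
  by case: (Hd p p' pp h i i' (Fq_ne0 Fi) (Fq_ne0 Fi')).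
under eq_bigr => h _ do rewrite e.
by rewrite exchange_big.
Qed.

Lemma MT_indepI (r : AS -> R) : nonneg r -> (forall h i i', r (h,i) = r (h,i')) ->
  MT r = (#|IA| * [exists x, r x != 0%R])%N.
Proof.
move=> rn ri.
case: (pickP (@predT IA)) => [i0 _|eI]; last first.
  rewrite (eq_card0 (A:=IA)) ?mul0n; last by move=> i; move: (eI i).
  by rewrite /MT big1 // => h _; rewrite sum_empty // => i; move: (eI i).
have mxi : forall i, mx r i = mx r i0 by move=> i; apply: eq_bigr => h _; rewrite (ri _ i i0).
have Fi : forall h i, Fq r h i = Fq r h i0 by move=> h i; rewrite /Fq mxi (ri _ i i0).
rewrite /MT.
have e : forall h, (\sum_(i : IA) (Fq r h i : nat) = #|IA| * Fq r h i0)%N.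
  move=> h; under eq_bigr => i _ do rewrite Fi -(mul1n (Fq r h i0)).
  by rewrite -big_distrl /= sum1_card.
under eq_bigr => h _ do rewrite e.
rewrite -(big_morph (fun x => #|IA| * x)%N (fun x y => maxnMr #|IA| x y) (muln0 _)) maxb.
congr (_ * _)%N; congr nat_of_bool.
apply/existsP/existsP => [[h Fh]|[[h1 i1] rx]]; first by exists (h, i0); exact: Fq_ne0.
have [h mxh] := mx_attain i0 h1 rn.
exists h; rewrite /Fq -mxh eqxx andbT.
rewrite (ri h1 i1 i0) in rx.
have := mx_ge r h1 i0; rewrite mxh => le1.
rewrite gt_eqF //; apply: lt_le_trans le1; rewrite lt_def rx rn //.
Qed.

Lemma MT_indepH (r : AS -> R) : nonneg r -> (forall h h' i, r (h,i) = r (h',i)) ->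
  MT r = (\max_(h : HA) \sum_(i : IA) (r (h,i) != 0%R : nat))%N.
Proof.
move=> rn rh; apply: eq_bigr => h _; apply: eq_bigr => i _; rewrite /Fq.
have -> : mx r i = r (h,i).
  apply/eqP; rewrite eq_le mx_ge andbT; apply: bigmax_le => // h' _.
  by rewrite (rh h' h).
by rewrite eqxx andbT.
Qed.

Lemma L_sumH : (forall p h i i', Q p (h,i) = Q p (h,i')) ->
  MT q = (\max_(p < n) MT (Q p))%N.
Proof.
move=> Qi.
rewrite MT_indepI; last first.
  by move=> h i i'; rewrite /q; apply: eq_bigr => p _; apply: Qi.
  exact: q_nonneg.
under eq_bigr => p _ do rewrite (MT_indepI (Qn p) (Qi p)).
rewrite -(big_morph (fun x => #|IA| * x)%N (fun x y => maxnMr #|IA| x y) (muln0 _)) maxb.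
congr (_ * _)%N; congr nat_of_bool.
apply/existsP/existsP => [[x qx]|[p /existsP [x Qx]]].
  have : ~~ all (fun p => true ==> (Q p x == 0)) (index_enum 'I_n).
    by rewrite -psumr_eq0 // => p _; apply: Qn.
  case/allPn => p _ /= Qp; by exists p; apply/existsP; exists x.
exists x; apply: contraNN Qx => /eqP.
move/eqP; rewrite /q psumr_eq0 => [/allP /(_ p) |p' _]; last exact: Qn.
by rewrite mem_index_enum => /(_ isT).
Qed.

Lemma L_sumI : (forall p h h' i, Q p (h,i) = Q p (h',i)) ->
  (forall p p', p != p' -> forall h h' i, Q p (h,i) != 0 -> Q p' (h',i) != 0 -> False) ->
  MT q = (\sum_(p < n) MT (Q p))%N.
Proof.
move=> Qh Id.
rewrite MT_indepH; last first.
  by move=> h h' i; rewrite /q; apply: eq_bigr => p _; apply: Qh.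
  exact: q_nonneg.
under [in RHS]eq_bigr => p _ do rewrite (MT_indepH (Qn p) (Qh p)).
case: (pickP (@predT HA)) => [h0 _|eH]; last first.
  rewrite max_empty; last by move=> h; move: (eH h).
  by rewrite big1 // => p _; rewrite max_empty // => h; move: (eH h).
rewrite (@maxconst _ _ h0); last first.
  by move=> h; apply: eq_bigr => i _; rewrite /q; congr (nat_of_bool (_ != _)); apply: eq_bigr => p _; apply: Qh.
rewrite [in RHS](eq_bigr (fun p => \sum_(i : IA) (Q p (h0,i) != 0%R : nat))%N); last first.
  move=> p _; apply: maxconst => h; apply: eq_bigr => i _; by rewrite (Qh p h h0).
have e : forall i, ((q (h0,i) != 0%R) : nat) = (\sum_(p < n) (Q p (h0,i) != 0%R : nat))%N.
  move=> i; apply: sum_one_R => [p|p p' pp]; first exact: Qn.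
  case: (eqVneq (Q p (h0,i)) 0) => [|Qp]; first by left.
  case: (eqVneq (Q p' (h0,i)) 0) => [|Qp']; first by right.
  by case: (Id p p' pp h0 h0 i Qp Qp').
rewrite (eq_bigr _ (fun i _ => e i)).
by rewrite exchange_big.
Qed.
End Sums.
End M.
Section G.
Variables (T N : Type) (f : seq T -> N -> T) (d : T) (dn : N).
Definition Gf (C : seq N) := foldl (fun acc n => rcons acc (f acc n)) [::] C.

Lemma Gf_rcons C n : Gf (rcons C n) = rcons (Gf C) (f (Gf C) n).
Proof. by rewrite /Gf foldl_rcons. Qed.

Lemma Gf_size C : size (Gf C) = size C.
Proof. by elim/last_ind: C => // C n IH; rewrite Gf_rcons !size_rcons IH. Qed.

Lemma Gf_nth C k : (k < size C)%N -> nth d (Gf C) k = f (take k (Gf C)) (nth dn C k).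
Proof.
elim/last_ind: C k => // C n IH k; rewrite size_rcons ltnS leq_eqVlt => /orP [/eqP ->|lt].
  rewrite Gf_rcons !nth_rcons Gf_size ltnn eqxx -cats1 -(Gf_size C) takel_cat // take_size.
  by [].
rewrite Gf_rcons nth_rcons Gf_size lt IH // nth_rcons lt -cats1 takel_cat //.
by rewrite Gf_size ltnW.
Qed.
End G.

Lemma foldl_eq_in (A : Type) (B : eqType) (cs : seq B) (f g : A -> B -> A) (a : A) :
  (forall x c, c \in cs -> f x c = g x c) -> foldl f a cs = foldl g a cs.
Proof.
elim: cs a => //= c cs IH a fg; rewrite fg ?mem_head // IH // => x c' cc'.
by apply: fg; rewrite inE cc' orbT.
Qed.

Lemma mem_bigcup_seq (T : finType) (cs : seq nat) (F : nat -> {set T}) v :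
  (v \in \bigcup_(j <- cs) F j) = has (fun j => v \in F j) cs.
Proof. by elim: cs => [|c cs IH]; rewrite ?big_nil ?in_set0 // big_cons in_setU IH. Qed.

Section Circ.
Variables (Hv Iv : finType) (D : Hv + Iv -> finType) (R : realType).
Variable (C : circuit D R).
Hypothesis wf : wf_circuit C.

Lemma sems_nth k : (k < size C)%N ->
  nth (fdef D R) (sems C) k = node_sem (take k (sems C)) (nth (ndef D R) C k).
Proof. exact: Gf_nth. Qed.

Lemma sems_size : size (sems C) = size C.
Proof. exact: Gf_size. Qed.

Lemma wf_child k : (k < size C)%N -> forall j, j \in children (nth (ndef D R) C k) -> (j < k)%N.
Proof.
move=> lt j; have := wf.2.1 k lt; case: (nth (ndef D R) C k) => [W f|cs|a b] /=.
- by move=> _; rewrite in_nil.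
- by move=> H jc; exact: (allP H j jc).
- by case/and3P => ? ? _; rewrite !inE => /orP [] /eqP ->.
Qed.

Lemma node_eqs k : (k < size C)%N -> match nth (ndef D R) C k with
 | Inp W f => pfun C k = f /\ pvars C k = W
 | SumN cs => (forall x, pfun C k x = \sum_(j <- cs) pfun C j x) /\
              pvars C k = \bigcup_(j <- cs) pvars C j
 | ProdN a b => (forall x, pfun C k x = pfun C a x * pfun C b x) /\
                pvars C k = pvars C a :|: pvars C b
 end.
Proof.
move=> lt; have ch := wf_child lt; rewrite /pfun /pvars (sems_nth lt).
case: (nth (ndef D R) C k) ch => [W f|cs|a b] //= ch.
  split; first by move=> x; apply: eq_big_seq => j jc; rewrite nth_take // ch.
  by apply: eq_big_seq => j jc; rewrite nth_take // ch.
have ha : (a < k)%N by apply: ch; rewrite inE eqxx.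
have hb : (b < k)%N by apply: ch; rewrite !inE eqxx orbT.
by rewrite !nth_take.
Qed.

Lemma dep_sub (q : Asg D -> R) (W W' : {set Hv + Iv}) : dep q W -> W \subset W' -> dep q W'.
Proof. by move=> d sub x y ag; apply: d => v vW; apply: ag; apply: (subsetP sub). Qed.

Lemma pfun_ok k : (k < size C)%N -> nonneg (pfun C k) /\ dep (pfun C k) (pvars C k).
Proof.
elim/ltn_ind: k => k IH lt.
have ch := wf_child lt; have ne := node_eqs lt; have w := wf.2.1 k lt.
case: (nth (ndef D R) C k) ch ne w => [W f|cs|a b] /= ch [ep ev] w.
- by rewrite ep ev; case: w => w1 w2; split => // x y; exact: w2.
- have chk : forall j, j \in cs -> (j < size C)%N by move=> j jc; apply: ltn_trans (ch j jc) lt.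
  have IHc : forall j, j \in cs -> nonneg (pfun C j) /\ dep (pfun C j) (pvars C j).
    by move=> j jc; apply: IH; [exact: ch | exact: chk].
  split.
    by move=> x; rewrite ep big_seq; apply: sumr_ge0 => j jc; exact: (IHc j jc).1.
  move=> x y ag; rewrite !ep; apply: eq_big_seq => j jc.
  apply: (IHc j jc).2 => v vj; apply: ag; rewrite ev mem_bigcup_seq.
  by apply/hasP; exists j.
have ha : (a < k)%N by apply: ch; rewrite inE eqxx.
have hb : (b < k)%N by apply: ch; rewrite !inE eqxx orbT.
have [na da] := IH a ha (ltn_trans ha lt).
have [nb db] := IH b hb (ltn_trans hb lt).
split; first by move=> x; rewrite ep mulr_ge0.
move=> x y ag; rewrite !ep (da x y) ?(db x y) // => v vw; apply: ag; rewrite ev in_setU vw ?orbT //.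
Qed.
End Circ.

Section Circ2.
Variables (Hv Iv : finType) (D : Hv + Iv -> finType) (R : realType).
Variable (C : circuit D R).
Hypothesis wf : wf_circuit C.
Hypothesis sm : smooth C.
Hypothesis dc : decomposable C.
Hypothesis detH : deterministic (Hset Hv Iv) C.
Hypothesis detI : deterministic (Iset Hv Iv) C.

Lemma MT_ext (q q' : Asg D -> R) : (forall x, q x = q' x) -> MT q = MT q'.
Proof.
move=> e; apply: eq_bigr => h _; apply: eq_bigr => i _.
by rewrite /Fq /mx e; congr (_ && (_ == _)); apply: eq_bigr => h' _; rewrite e.
Qed.

Lemma MT_le (q : Asg D -> R) : (MT q <= #|IAsg D|)%N.
Proof.
apply/bigmax_leqP => h _; rewrite -sum1_card; apply: leq_sum => i _; exact: leq_b1.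
Qed.

Lemma inH (v : Hv + Iv) : (v \in Hset Hv Iv) = (if v is inl _ then true else false).
Proof. by rewrite inE. Qed.
Lemma inI (v : Hv + Iv) : (v \in Iset Hv Iv) = (if v is inl _ then false else true).
Proof. by rewrite inE inH; case: v. Qed.

Lemma MT_sum k cs : (k < size C)%N -> nth (ndef D R) C k = SumN D R cs ->
  let hasH := (pvars C k :&: Hset Hv Iv) != set0 in
  let hasI := (pvars C k :&: Iset Hv Iv) != set0 in
  MT (pfun C k) = if hasI && ~~ hasH then (\sum_(j <- cs) MT (pfun C j))%N
                  else (\max_(j <- cs) MT (pfun C j))%N.
Proof.
move=> lt e hasH hasI.
have ne := node_eqs wf lt; rewrite e in ne; case: ne => ep ev.
have ch := wf_child wf lt; rewrite e /= in ch.
have chk : forall j, j \in cs -> (j < size C)%N by move=> j jc; apply: ltn_trans (ch j jc) lt.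
have pv : forall j, j \in cs -> pvars C j = pvars C k.
  move=> j jc; apply/setP => v; rewrite ev mem_bigcup_seq; apply/idP/hasP => [vj|[j' j'c vj']].
    by exists j.
  by rewrite (sm lt e jc j'c).
pose n := size cs.
pose Q := fun (p : 'I_n) => pfun C (nth 0%N cs p).
have Qin : forall p : 'I_n, nth 0%N cs p \in cs by move=> p; apply: mem_nth.
have Qok : forall p, nonneg (Q p) /\ dep (Q p) (pvars C k).
  by move=> p; have [nn dd] := pfun_ok wf (chk _ (Qin p)); rewrite -(pv _ (Qin p)).
have Qn : forall p, nonneg (Q p) by move=> p; exact: (Qok p).1.
rewrite (@MT_ext _ (fun x => \sum_(p < n) Q p x)); last first.
  by move=> x; rewrite ep (big_nth 0%N) big_mkord.
rewrite (big_nth 0%N) big_mkord [in X in if _ then _ else X](big_nth 0%N) big_mkord.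
have Idisj : hasI -> forall p p' : 'I_n, p != p' -> forall h h' i, Q p (h,i) != 0 -> Q p' (h',i) != 0 -> False.
  move=> hI p p' pp h h' i Qp Qp'.
  case: (detI lt e) => [|dj]; first by rewrite setIC => /eqP; rewrite (negbTE hI).
  apply: (dj p p' (ltn_ord p) (ltn_ord p')); first by move=> ep'; move: pp; rewrite -val_eqE /= ep' eqxx.
  exists (h,i); split; first by exists (h,i); split => //; exact/eqP.
  exists (h',i); split; last exact/eqP.
  by case=> [a|b] //; rewrite in_setI inI.
have Hdisj : hasH -> forall p p' : 'I_n, p != p' -> forall h i i', Q p (h,i) != 0 -> Q p' (h,i') != 0 -> False.
  move=> hH p p' pp h i i' Qp Qp'.
  case: (detH lt e) => [|dj]; first by rewrite setIC => /eqP; rewrite (negbTE hH).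
  apply: (dj p p' (ltn_ord p) (ltn_ord p')); first by move=> ep'; move: pp; rewrite -val_eqE /= ep' eqxx.
  exists (h,i); split; first by exists (h,i); split => //; exact/eqP.
  exists (h,i'); split; last exact/eqP.
  by case=> [a|b] //; rewrite in_setI inH.
case: (boolP hasI) => hI /=; last first.
  apply: L_sumH => // p h i i'; apply: (Qok p).2 => -[a|b] // vk.
  by move: hI; rewrite negbK => /eqP /setP /(_ (inr b)); rewrite in_setI vk inI in_set0.
case: (boolP hasH) => hH /=; last first.
  apply: L_sumI; first (by []); last exact: Idisj. move=> p h h' i; apply: (Qok p).2 => -[a|b] // vk.
  by move: hH; rewrite negbK => /eqP /setP /(_ (inl a)); rewrite in_setI vk inH in_set0.
apply: L_sumHI => //; [exact: Idisj | exact: Hdisj].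
Qed.
End Circ2.

Section Alg.
Variable R : realType.
Definition o0 : 'I_6 := @Ordinal 6 0 isT.
Definition o1 : 'I_6 := @Ordinal 6 1 isT.
Definition o2 : 'I_6 := @Ordinal 6 2 isT.
Definition o3 : 'I_6 := @Ordinal 6 3 isT.
Definition o4 : 'I_6 := @Ordinal 6 4 isT.
Definition o5 : 'I_6 := @Ordinal 6 5 isT.

Definition EMax (X : Type) (a b : expr R X) : expr R X := EIfLe a b b a.
Definition EOr (X : Type) (x y : X) : expr R X :=
  EAdd (EAdd (EVar x) (EVar y)) (EOpp (EMul (EVar x) (EVar y))).

Definition aprod (j : 'I_6) : expr R ('I_6 + 'I_6)%type :=
  match nat_of_ord j with
  | 0 => EMul (EMul (EVar (inl o0)) (EVar (inr o0))) (EVar (inl o1))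
  | 1 => EVar (inl o1)
  | 2 => EOr (inl o2) (inr o2)
  | 3 => EOr (inl o3) (inr o3)
  | _ => ECst 0
  end.
Definition asinit (j : 'I_6) : expr R void := ECst 0.
Definition asstep (j : 'I_6) : expr R ('I_6 + 'I_6)%type :=
  match nat_of_ord j with
  | 0 => ECst 0
  | 1 => EMax (EVar (inl o1)) (EVar (inr o1))
  | 2 => EMax (EVar (inl o2)) (EVar (inr o2))
  | 3 => EMax (EVar (inl o3)) (EVar (inr o3))
  | 4 => EAdd (EVar (inl o4)) (EVar (inr o0))
  | _ => EMax (EVar (inl o5)) (EVar (inr o0))
  end.
Definition asfin (j : 'I_6) : expr R 'I_6 :=
  match nat_of_ord j with
  | 0 => EIfLe (ECst 1) (EAdd (EVar o3) (EOpp (EVar o2))) (EVar o4) (EVar o5)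
  | 1 => EVar o1
  | 2 => EVar o2
  | 3 => EVar o3
  | _ => ECst 0
  end.
Definition ainp (Hv Iv : finType) (D : Hv + Iv -> finType) (W : {set Hv + Iv})
  (f : Asg D -> R) (j : 'I_6) : R :=
  match nat_of_ord j with
  | 0 => (MT f)%:R
  | 1 => (#|IAsg D|%:R)^-1
  | 2 => ((W :&: Hset Hv Iv) != set0)%:R
  | 3 => ((W :&: Iset Hv Iv) != set0)%:R
  | _ => 0
  end.
Definition Alg : algorithm R := @Algorithm R 6 ainp aprod asinit asstep asfin (EVar o0).
End Alg.

Section Folds.
Variable R : realType.
Definition rmax (x y : R) := if x <= y then y else x.

Lemma foldl_comp (A B Cc : Type) (step : A -> B -> A) (pr : A -> Cc) (g : Cc -> B -> Cc) :
  (forall a b, pr (step a b) = g (pr a) b) -> forall cs a, pr (foldl step a cs) = foldl g (pr a) cs.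
Proof. by move=> e; elim=> //= c cs IH a; rewrite IH e. Qed.

Lemma foldl_add (g : nat -> R) cs x : foldl (fun a c => a + g c) x cs = x + \sum_(c <- cs) g c.
Proof. by elim: cs x => [|c cs IH] x /=; rewrite ?big_nil ?addr0 // IH big_cons addrA. Qed.

Lemma rmax_nat (x y : nat) : rmax x%:R y%:R = (maxn x y)%:R.
Proof.
rewrite /rmax ler_nat; case: (leqP x y) => h; by [].
Qed.

Lemma foldl_rmax_nat (m : nat -> nat) cs x :
  foldl (fun a c => rmax a (m c)%:R) (x%:R) cs = (maxn x (\max_(c <- cs) m c))%:R.
Proof.
elim: cs x => [|c cs IH] x /=; first by rewrite big_nil maxn0.
by rewrite rmax_nat IH big_cons maxnA.
Qed.

Lemma foldl_rmax_const (g : nat -> R) v cs : (forall c, c \in cs -> g c = v) ->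
  forall a, a <= v -> foldl (fun a c => rmax a (g c)) a cs = if cs is [::] then a else v.
Proof.
elim: cs => [|c cs IH] // gv a av /=.
have -> : rmax a (g c) = v by rewrite gv ?mem_head // /rmax av.
rewrite IH //; first by case: cs {IH gv}.
by move=> c' cc'; apply: gv; rewrite inE cc' orbT.
Qed.

Lemma rmax_v (a b v : R) : 0 <= v -> (a = 0 \/ a = v) -> (b = 0 \/ b = v) ->
  (rmax a b = 0 \/ rmax a b = v) /\ ((a = v \/ b = v) -> rmax a b = v).
Proof.
move=> v0 av bv; split; first by rewrite /rmax; case: ifP.
rewrite /rmax; case=> [->|->].
  case: ifP => // vb; case: bv => // b0; move: vb; rewrite b0 => vb.
  by apply/eqP; rewrite eq_le vb v0.
by case: av => ->; rewrite ?v0 ?lexx.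
Qed.

Lemma foldl_rmax_inv (g : nat -> R) v cs : 0 <= v -> (forall c, c \in cs -> g c = 0 \/ g c = v) ->
  forall a, (a = 0 \/ a = v) ->
  (foldl (fun a c => rmax a (g c)) a cs = 0 \/ foldl (fun a c => rmax a (g c)) a cs = v) /\
  ((a = v \/ has (fun c => g c == v) cs) -> foldl (fun a c => rmax a (g c)) a cs = v).
Proof.
move=> v0; elim: cs => [|c cs IH] gv a av /=; first by split => // -[].
have gv' : forall c', c' \in cs -> g c' = 0 \/ g c' = v by move=> c' cc'; apply: gv; rewrite inE cc' orbT.
have gc := gv c (mem_head _ _).
have [r0 r1] := rmax_v v0 av gc.
have [IH1 IH2] := IH gv' _ r0.
split => // H; apply: IH2.
case: H => [H|/orP [/eqP H|H]]; [by left; apply: r1; left | by left; apply: r1; right | by right].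
Qed.
End Folds.

Lemma fold_comps (R : realType) (g : nat -> 'I_6 -> R) (a0 : 'I_6 -> R) cs :
  let fin := foldl (fun s c => fun j => eeval (@pair_env R (Alg R) s (g c)) (asstep R j)) a0 cs in
  [/\ fin o1 = foldl (fun a c => rmax a (g c o1)) (a0 o1) cs,
      fin o2 = foldl (fun a c => rmax a (g c o2)) (a0 o2) cs,
      fin o3 = foldl (fun a c => rmax a (g c o3)) (a0 o3) cs,
      fin o4 = foldl (fun a c => a + g c o0) (a0 o4) cs &
      fin o5 = foldl (fun a c => rmax a (g c o0)) (a0 o5) cs].
Proof.
by split; apply: (foldl_comp (pr := fun s : 'I_6 -> R => s _)).
Qed.

Section Circ3.
Variables (Hv Iv : finType) (D : Hv + Iv -> finType) (R : realType).
Variable (C : circuit D R).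
Hypothesis wf : wf_circuit C.
Hypothesis sm : smooth C.
Hypothesis dc : decomposable C.
Hypothesis detH : deterministic (Hset Hv Iv) C.
Hypothesis detI : deterministic (Iset Hv Iv) C.

Let A := Alg R.
Let S := states A C.
Let cI : R := (#|IAsg D|%:R)^-1.

Definition Inv k (s : 'I_6 -> R) :=
  [/\ s o0 = (MT (pfun C k))%:R, s o1 = 0 \/ s o1 = cI, (MT (pfun C k) != 0)%N -> s o1 = cI,
      s o2 = ((pvars C k :&: Hset Hv Iv) != set0)%:R &
      s o3 = ((pvars C k :&: Iset Hv Iv) != set0)%:R].

Lemma states_nth k : (k < size C)%N ->
  nth (@sdef R A) S k = node_state (take k S) (nth (ndef D R) C k).
Proof. exact: Gf_nth. Qed.

Lemma cI_ge0 : 0 <= cI.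
Proof. by rewrite invr_ge0 ler0n. Qed.

Lemma flag_or (b1 b2 : bool) : (b1%:R + b2%:R - b1%:R * b2%:R : R) = (b1 || b2)%:R.
Proof. by case: b1; case: b2; rewrite /= ?mulr0 ?mul0r ?mulr1 ?subr0 ?addr0 ?add0r // addrK. Qed.

Lemma flag_cond (b2 b3 : bool) : ((1 : R) <= b3%:R - b2%:R) = b3 && ~~ b2.
Proof.
case: b2; case: b3; rewrite /= ?subr0 ?subrr ?lexx //.
- by rewrite ler10.
- by apply/negbTE; rewrite -ltNge; lra.
- by rewrite ler10.
Qed.

Lemma main_inv k : (k < size C)%N -> Inv k (nth (@sdef R A) S k).
Proof.
elim/ltn_ind: k => k IH lt.
have ch := wf_child wf lt; have ne := node_eqs wf lt.
have IHc : forall j, j \in children (nth (ndef D R) C k) -> Inv j (nth (@sdef R A) S j).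
  by move=> j jc; apply: IH (ch j jc) (ltn_trans (ch j jc) lt).
rewrite states_nth //.
case e: (nth (ndef D R) C k) ch ne IHc => [W f|cs|a b] /= ch [ep ev] IHc.
- by rewrite /Inv /= ep ev; split => //; right.
- have [F1 F2 F3 F4 F5] := fold_comps (fun c => nth (@sdef R A) (take k S) c) (fun _ => 0) cs.
  rewrite /Inv /= F1 F2 F3 F4 F5.
  have ntk : forall c, c \in cs -> nth (@sdef R A) (take k S) c = nth (@sdef R A) S c.
    by move=> c cc; rewrite nth_take // ch.
  have E (j : 'I_6) : foldl (fun a c => rmax a (nth (@sdef R A) (take k S) c j)) 0 cs =
                      foldl (fun a c => rmax a (nth (@sdef R A) S c j)) 0 cs.
    by apply: foldl_eq_in => x c cc; rewrite ntk.
  have E' : foldl (fun a c => a + nth (@sdef R A) (take k S) c o0) 0 cs =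
            foldl (fun a c => a + nth (@sdef R A) S c o0) 0 cs.
    by apply: foldl_eq_in => x c cc; rewrite ntk.
  rewrite !E E'.
  have chk : forall j, j \in cs -> (j < size C)%N by move=> j jc; apply: ltn_trans (ch j jc) lt.
  have pv : forall j, j \in cs -> pvars C j = pvars C k.
    move=> j jc; apply/setP => v; rewrite ev mem_bigcup_seq; apply/idP/hasP => [vj|[j' j'c vj']].
      by exists j.
    by rewrite (sm lt e jc j'c).
  have e4 : foldl (fun a c => a + nth (@sdef R A) S c o0) 0 cs = (\sum_(c <- cs) MT (pfun C c))%:R.
    rewrite foldl_add add0r natr_sum; apply: eq_big_seq => c cc.
    by case: (IHc c cc).
  have e5 : foldl (fun a c => rmax a (nth (@sdef R A) S c o0)) 0 cs = (\max_(c <- cs) MT (pfun C c))%:R.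
    rewrite (@foldl_eq_in _ _ _ _ (fun a c => rmax a (MT (pfun C c))%:R)); last first.
      by move=> x c cc; case: (IHc c cc) => ->.
    by rewrite -[0]/(0%:R) foldl_rmax_nat max0n.
  have e2 : foldl (fun a c => rmax a (nth (@sdef R A) S c o2)) 0 cs = ((pvars C k :&: Hset Hv Iv) != set0)%:R.
    rewrite (@foldl_rmax_const _ _ ((pvars C k :&: Hset Hv Iv) != set0)%:R) //; last first.
      by move=> c cc; case: (IHc c cc) => _ _ _ -> _; rewrite pv.
    case: cs e ch ep ev IHc ntk E E' chk pv e4 e5 {F1 F2 F3 F4 F5} => // e ch ep ev *.
    by rewrite ev big_nil set0I eqxx.
  have e3 : foldl (fun a c => rmax a (nth (@sdef R A) S c o3)) 0 cs = ((pvars C k :&: Iset Hv Iv) != set0)%:R.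
    rewrite (@foldl_rmax_const _ _ ((pvars C k :&: Iset Hv Iv) != set0)%:R) //; last first.
      by move=> c cc; case: (IHc c cc) => _ _ _ _ ->; rewrite pv.
    case: cs e ch ep ev IHc ntk E E' chk pv e4 e5 {F1 F2 F3 F4 F5 e2} => // e ch ep ev *.
    by rewrite ev big_nil set0I eqxx.
  have [i1 i2] := @foldl_rmax_inv _ (fun c => nth (@sdef R A) S c o1) cI cs cI_ge0
     (fun c cc => match IHc c cc with And5 _ x _ _ _ => x end) 0 (or_introl erefl).
  rewrite e2 e3 e4 e5 flag_cond -(fun_if (fun n : nat => n%:R : R)) -MT_sum //.
  split => //.
  move=> Mn; apply: i2; right.
  case: (boolP (has (fun c => MT (pfun C c) != 0%N) cs)) => [/hasP [c cc Mc] | hn].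
    apply/hasP; exists c => //; apply/eqP; by case: (IHc c cc) => _ _ ->.
  exfalso; move: Mn; rewrite (MT_sum wf sm detH detI lt e).
  have z : forall c, c \in cs -> MT (pfun C c) = 0%N.
    by move=> c cc; move/hasPn: hn => /(_ c cc); rewrite negbK => /eqP.
  by rewrite (big1_seq _ _ _ (fun c => fun h => z c (andP h).2)) big1_seq ?if_same ?eqxx // => c /andP [_ cc]; rewrite z.
- have ha : (a < k)%N by apply: ch; rewrite inE eqxx.
  have hb : (b < k)%N by apply: ch; rewrite !inE eqxx orbT.
  rewrite !nth_take //.
  have [a0 a1 a1' a2 a3] := IHc a (mem_head _ _).
  have hbm : b \in [:: a; b] by rewrite !inE eqxx orbT.
  have [b0 b1 b1' b2 b3] := IHc b hbm.
  have [na da] := pfun_ok wf (ltn_trans ha lt).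
  have [nb db] := pfun_ok wf (ltn_trans hb lt).
  have eM := L_prod na nb da db (dc lt e).
  rewrite -(MT_ext ep) in eM.
  have MkI := MT_le (pfun C k).
  have aux : (MT (pfun C k) != 0)%N -> (MT (pfun C a) != 0)%N.
    move=> Mn; apply/eqP => Ma0; move: eM; rewrite Ma0 mul0n => /eqP; rewrite muln_eq0.
    case/orP => /eqP h0; first by rewrite h0 in Mn.
    by move: MkI Mn; rewrite h0 leqn0 => /eqP ->.
  split => /=.
  + rewrite a0 b0; case: (eqVneq (MT (pfun C a)) 0%N) => [Ma0|Man].
      rewrite Ma0 !mul0r; case: (eqVneq (MT (pfun C k)) 0%N) => [-> //|Mn].
      by move: (aux Mn); rewrite Ma0.
    have Ipos : (0 < #|IAsg D|)%N by apply: leq_trans (MT_le (pfun C a)); rewrite lt0n.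
    rewrite (a1' Man) -natrM -eM natrM mulfK //.
    by rewrite pnatr_eq0 -lt0n.
  + exact: a1.
  + by move=> Mn; apply: a1'; apply: aux.
  + by rewrite a2 b2 flag_or ev setIUl setU_eq0 negb_and.
  + by rewrite a3 b3 flag_or ev setIUl setU_eq0 negb_and.
Qed.
End Circ3.

Lemma size_edges (Hv Iv : finType) (D : Hv + Iv -> finType) (R : realType) (C : circuit D R) :
  wf_circuit C -> (size C <= (edges C).+1)%N.
Proof.
move=> wf.
have sz : size C = (croot C).+1 by rewrite /croot prednK //; case: wf.
rewrite sz ltnS.
have -> : edges C = size (flatten (map (@children _ _ D R) C)).
  by rewrite size_flatten /shape -map_comp sumnE big_map.
rewrite -{1}(size_iota 0 (croot C)); apply: uniq_leq_size; first exact: iota_uniq.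
move=> k; rewrite mem_iota add0n => /andP [_ lt].
have [k' lt' kin] := wf.2.2 k lt.
apply/flattenP; exists (nth [::] (map (@children _ _ D R) C) k').
  by apply: mem_nth; rewrite size_map.
by rewrite (nth_map (ndef D R)).
Qed.

Definition Kc (R : realType) : nat :=
  (Defs.tsize (@a_prod R (Alg R)) + Defs.tsize (@a_sinit R (Alg R)) + Defs.tsize (@a_sstep R (Alg R))
   + Defs.tsize (@a_sfin R (Alg R)) + 1)%N.

Lemma node_cost_le (R : realType) (Hv Iv : finType) (D : Hv + Iv -> finType) (n : node D R) :
  (node_cost (Alg R) n <= Kc R * (size (children n)).+1)%N.
Proof.
rewrite /Kc; case: n => [W f|cs|a b] /=.
- by rewrite muln1 addn1.
- rewrite mulnS; nia.
- lia.
Qed.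

Lemma cost_le (R : realType) (Hv Iv : finType) (D : Hv + Iv -> finType) (C : circuit D R) :
  wf_circuit C -> (cost (Alg R) C <= (2 * Kc R + 1) * (edges C).+1)%N.
Proof.
move=> wf; have se := size_edges wf.
rewrite /cost /=.
have h1 : (\sum_(n <- C) node_cost (Alg R) n <= \sum_(n <- C) Kc R * (size (children n)).+1)%N.
  by apply: leq_sum => n _; apply: node_cost_le.
have h2 : (\sum_(n <- C) Kc R * (size (children n)).+1 = Kc R * (edges C + size C))%N.
  rewrite -big_distrr /=; congr (_ * _)%N.
  under eq_bigr => n _ do rewrite -addn1.
  by rewrite big_split /= sum1_size.
rewrite h2 in h1.
nia.
Qed.

Theorem theorem6 :
  forall R : realType,
  exists (A : algorithm R) (c0 : nat),
  forall (Hv Iv : finType) (D : Hv + Iv -> finType) (C : circuit D R),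
    wf_circuit C ->
    smooth C ->
    decomposable C ->
    deterministic (Hset Hv Iv) C ->
    deterministic (Iset Hv Iv) C ->
    deterministic (Hset Hv Iv :|: Iset Hv Iv) C ->
    pvars C (croot C) = [set: Hv + Iv] ->
    run A C = (mfe_value C)%:R /\ (cost A C <= c0 * (edges C).+1)%N.
Proof.
move=> R; exists (Alg R), (2 * Kc R + 1)%N.
move=> Hv Iv D C wf sm dc dH dI _ _; split; last exact: cost_le.
have lt : (croot C < size C)%N by rewrite /croot prednK //; case: wf.
have [e0 _ _ _ _] := main_inv wf sm dc dH dI lt.
rewrite /run /= mfeE; exact: e0.

Qed.
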